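(* In the finite-horizon reinsurance model of the context, define non-negative coefficients recursively by $a_{N-1}=1$, $a_n=1+\beta a_{n+1}$; $\underline c_{N-1}=\operatorname{ess\,sup}(Z_N)$, $\underline c_n=(1+\beta a_{n+1})\operatorname{ess\,sup}(Z_{n+1})+\beta\underline c_{n+1}$; $\bar c_{N-1}=\rho_{N-1}(Y_N)+\pi_{R,N-1}(Y_N)$, $\bar c_n=\rho_n\big((1+\beta a_{n+1})Y_{n+1}\big)+(1+\beta a_{n+1})\pi_{R,n}(Y_{n+1})+\beta\bar c_{n+1}$, for $n=N-2,\dots,0$, and the decreasing functions $\underline b_n(x)=-\underline c_n-a_nx^+$, $\bar b_n(x)=\bar c_n+a_nx^-$. Then for every policy $\pi\in\Pi$, every $n=0,\dots,N-1$ and every history $h_n=(x_0,f_0,\dots,x_n)\in\mathcal H_n$, $$\underline b_n(x_n)\le V_{n\pi}(h_n)\le \bar b_n(x_n).$$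
   Context: Probability space $(\Omega,\mathcal A,\mathbb P)$, $p\in[1,\infty)$, $L^p$ real random variables with finite $p$-th moment, $L^p_+$ the nonnegative ones; positive values are losses. For a map $\rho:L^p\to\bar{\mathbb R}$ (risk measure) or $\pi:L^p_+\to\bar{\mathbb R}$ (premium principle): law-invariant means equal values for equally distributed arguments; monotone means $X\le X'$ a.s. implies $\rho(X)\le\rho(X')$; translation invariant means $\rho(X+c)=\rho(X)+c$ for $c\in\mathbb R$; normalized means $\rho(0)=0$; monetary means monotone and translation invariant; Fatou property means: $X_k\to X$ a.s., $X_k,X\in L^p$, $|X_k|\le W$ a.s. for some $W\in L^p$ imply $\liminf_k\rho(X_k)\ge\rho(X)$. $\mathcal F=\{f:\mathbb R_+\to\mathbb R_+ : f(t)\le t\ \forall t,\ f\text{ increasing},\ \mathrm{id}_{\mathbb R_+}-f\text{ increasing}\}$ with the metric of compact convergence. Finite-horizon model: horizon $N\in\mathbb N$, discount factor $\beta\in(0,1]$; $(Y_n,Z_n)_{n\ge1}$ an independent sequence of random vectors with $Y_n\in L^p_+$ (claims) and $Z_n\in L^\infty_+$ (premium income). For $n=0,\dots,N-1$: $\pi_{R,n}:L^p_+\to\bar{\mathbb R}$ is a law-invariant, monotone, normalized premium principle with the Fatou property and $\pi_{R,n}(Y_{n+1})<\infty$, and $\pi_{R,n}(f):=\pi_{R,n}(Y_{n+1}-f(Y_{n+1}))$ for $f\in\mathcal F$; $\rho_n:L^p\to\bar{\mathbb R}$ is a law-invariant, normalized monetary risk measure with the Fatou property such that $\rho_n(\lambda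 Y_{n+1})<\infty$ for all $\lambda\ge0$. Admissible actions $D_n(x)$ are either $\mathcal F$ for all $x$ (unconstrained) or $\{f\in\mathcal F:\pi_{R,n}(f)\le x^+\}$ (budget-constrained). Histories: $\mathcal H_0=\mathbb R$, $\mathcal H_n$ is the set of $h_n=(x_0,f_0,x_1,\dots,f_{n-1},x_n)$ with $x_k\in\mathbb R$, $f_k\in D_k(x_k)$. A policy $\pi=(d_0,\dots,d_{N-1})\in\Pi$ consists of measurable $d_n:\mathcal H_n\to\mathcal F$ with $d_n(h_n)\in D_n(x_n)$. Policy values: $V_{N\pi}\equiv0$ and $$V_{n\pi}(h_n)=\rho_n\Big(d_n(h_n)(Y_{n+1})+\pi_{R,n}(d_n(h_n))-Z_{n+1}-x_n+\beta V_{n+1,\pi}\big(h_n,d_n(h_n),x_n+Z_{n+1}-d_n(h_n)(Y_{n+1})-\pi_{R,n}(d_n(h_n))\big)\Big).$$ Standing assumption: the risk measures are such that all policy values are measurable functions of the history (so that the arguments of $\rho_n$ are random variables). $\operatorname{ess\,sup}$ denotes the essential supremum. *)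

(* Defs.v *)
From HB Require Import structures.
From mathcomp Require Import all_boot all_order all_algebra.
From mathcomp Require Import all_classical all_reals all_analysis.
From mathcomp Require Import ess_sup_inf.
Set Implicit Arguments. Unset Strict Implicit. Unset Printing Implicit Defensive.
Import Order.TTheory GRing.Theory Num.Theory Num.Def.
Import numFieldNormedType.Exports.
Local Open Scope classical_set_scope.
Local Open Scope ring_scope.

Definition Lp d (T : measurableType d) (R : realType) (P : probability T R)
  (p : R) (X : T -> R) : Prop :=
  measurable_fun setT X /\ (\int[P]_w ((`|X w| `^ p)%:E) < +oo)%E.

Definition Lp_plus d (T : measurableType d) (R : realType) (P : probability T R)
  (p : R) (X : T -> R) : Prop :=
  Lp P p X /\ {ae P, forall w, 0 <= X w}.

Definition Linf_plus d (T : measurableType d) (R : realType) (P : probability T R)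
  (Z : T -> R) : Prop :=
  [/\ measurable_fun setT Z, (exists M : R, {ae P, forall w, `|Z w| <= M})
    & {ae P, forall w, 0 <= Z w}].

Definition same_law d (T : measurableType d) (R : realType) (P : probability T R)
  (X X' : T -> R) : Prop :=
  forall B : set R, measurable B -> P (X @^-1` B) = P (X' @^-1` B).

Definition law_invariant d (T : measurableType d) (R : realType) (P : probability T R)
  (dom : (T -> R) -> Prop) (rho : (T -> R) -> \bar R) : Prop :=
  forall X X', dom X -> dom X' -> same_law P X X' -> rho X = rho X'.

Definition monotone_on d (T : measurableType d) (R : realType) (P : probability T R)
  (dom : (T -> R) -> Prop) (rho : (T -> R) -> \bar R) : Prop :=
  forall X X', dom X -> dom X' -> {ae P, forall w, X w <= X' w} ->
    (rho X <= rho X')%E.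

Definition translation_invariant d (T : measurableType d) (R : realType)
  (P : probability T R) (p : R) (rho : (T -> R) -> \bar R) : Prop :=
  forall (X : T -> R) (c : R), Lp P p X ->
    rho (fun w => X w + c) = (rho X + c%:E)%E.

Definition normalized (T : Type) (R : realType) (rho : (T -> R) -> \bar R) : Prop :=
  rho (fun _ => 0) = 0%E.

Definition fatou_property d (T : measurableType d) (R : realType) (P : probability T R)
  (p : R) (dom : (T -> R) -> Prop) (rho : (T -> R) -> \bar R) : Prop :=
  forall (Xk : nat -> T -> R) (X W : T -> R),
    (forall k, dom (Xk k)) -> dom X -> Lp P p W ->
    {ae P, forall w, (fun k => Xk k w) @ \oo --> X w} ->
    (forall k, {ae P, forall w, `|Xk k w| <= W w}) ->
    (rho X <= limn_einf (fun k => rho (Xk k)))%E.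

Definition risk_measure d (T : measurableType d) (R : realType) (P : probability T R)
  (p : R) (rho : (T -> R) -> \bar R) : Prop :=
  [/\ law_invariant P (Lp P p) rho, monotone_on P (Lp P p) rho,
      translation_invariant P p rho, normalized rho
    & fatou_property P p (Lp P p) rho].

Definition premium_principle d (T : measurableType d) (R : realType)
  (P : probability T R) (p : R) (pi : (T -> R) -> \bar R) : Prop :=
  [/\ law_invariant P (Lp_plus P p) pi, monotone_on P (Lp_plus P p) pi,
      normalized pi & fatou_property P p (Lp_plus P p) pi].

Definition indep_seq d (T : measurableType d) (R : realType) (P : probability T R)
  (Y Z : nat -> T -> R) : Prop :=
  forall (J : seq nat) (B : nat -> set (R * R)),
    uniq J -> all (fun j => 0 < j)%N J -> (forall j, measurable (B j)) ->
    P (\bigcap_(j in [set` J]) ((fun w => (Y j w, Z j w)) @^-1` B j)) =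
    (\prod_(j <- J) P ((fun w => (Y j w, Z j w)) @^-1` B j))%E.

(* A retention function f : R_+ -> R_+ is represented by a function R -> R,
   fixed to 0 on the negative reals (so that F is in bijection with the
   paper's set of functions on R_+). *)
Definition inF (R : realType) (f : R -> R) : Prop :=
  [/\ forall t, 0 <= t -> 0 <= f t <= t,
      forall t, t < 0 -> f t = 0,
      {in `[0, +oo[ &, {homo f : s t / s <= t}}
    & {in `[0, +oo[ &, {homo (fun t => t - f t) : s t / s <= t}}].

Definition piR (T : Type) (R : realType) (pi : nat -> (T -> R) -> \bar R)
  (Y : nat -> T -> R) (n : nat) (f : R -> R) : \bar R :=
  pi n (fun w => Y n.+1 w - f (Y n.+1 w)).

(* admissible actions D_n(x): budget = false (unconstrained) or
   budget = true ({f in F | pi_{R,n}(f) <= x^+}) *)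
Definition Dadm (T : Type) (R : realType) (pi : nat -> (T -> R) -> \bar R)
  (Y : nat -> T -> R) (budget : bool) (n : nat) (x : R) (f : R -> R) : Prop :=
  inF f /\ (budget -> (piR pi Y n f <= (Num.max x 0)%:E)%E).

(* A history h_n = (x_0, f_0, ..., x_{n-1}, f_{n-1}, x_n) is represented by the
   sequence h = [:: (x_0,f_0); ...; (x_{n-1},f_{n-1})] together with x_n. *)
Definition hist (R : realType) := seq (R * (R -> R)).

Definition valid_hist (T : Type) (R : realType) (pi : nat -> (T -> R) -> \bar R)
  (Y : nat -> T -> R) (budget : bool) (n : nat) (h : hist R) : Prop :=
  size h = n /\
  forall k, (k < n)%N ->
    Dadm pi Y budget k (nth (0, fun _ => 0) h k).1 (nth (0, fun _ => 0) h k).2.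

(* policy (d_0, ..., d_{N-1}); d n h x = d_n(h_n) *)
Definition policy (R : realType) := nat -> hist R -> R -> (R -> R).

Definition admissible_policy (T : Type) (R : realType)
  (pi : nat -> (T -> R) -> \bar R) (Y : nat -> T -> R) (budget : bool) (N : nat)
  (dp : policy R) : Prop :=
  forall n (h : hist R) (x : R), (n < N)%N -> valid_hist pi Y budget n h ->
    Dadm pi Y budget n x (dp n h x).

(* Vrec k n h x = V_{n,pi}(h_n) when k = N - n steps remain.  The real numbers
   pi_{R,n}(f) and V_{n+1,pi}(...) enter the argument of rho_n through [fine]
   (they are finite). *)
Fixpoint Vrec (T : Type) (R : realType) (rho pi : nat -> (T -> R) -> \bar R)
  (Y Z : nat -> T -> R) (beta : R) (dp : policy R)
  (k n : nat) (h : hist R) (x : R) {struct k} : \bar R :=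
  match k with
  | 0 => 0%E
  | k'.+1 =>
      let f := dp n h x in
      let c := fine (piR pi Y n f) in
      rho n (fun w =>
        f (Y n.+1 w) + c - Z n.+1 w - x
        + beta * fine (Vrec rho pi Y Z beta dp k' n.+1 (rcons h (x, f))
                         (x + Z n.+1 w - f (Y n.+1 w) - c)))
  end.

Definition Vpol (T : Type) (R : realType) (rho pi : nat -> (T -> R) -> \bar R)
  (Y Z : nat -> T -> R) (beta : R) (dp : policy R) (N n : nat) (h : hist R)
  (x : R) : \bar R :=
  Vrec rho pi Y Z beta dp (N - n) n h x.

Definition Varg (T : Type) (R : realType) (rho pi : nat -> (T -> R) -> \bar R)
  (Y Z : nat -> T -> R) (beta : R) (dp : policy R) (N n : nat) (h : hist R)
  (x : R) : T -> R :=
  let f := dp n h x in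
  let c := fine (piR pi Y n f) in
  fun w => f (Y n.+1 w) + c - Z n.+1 w - x
    + beta * fine (Vpol rho pi Y Z beta dp N n.+1 (rcons h (x, f))
                     (x + Z n.+1 w - f (Y n.+1 w) - c)).

(* Main.v *)
Require Import Defs.
From HB Require Import structures.
From mathcomp Require Import all_boot all_order all_algebra.
From mathcomp Require Import all_classical all_reals all_analysis.
From mathcomp Require Import ess_sup_inf.
From mathcomp Require Import ring lra measurable_realfun.
Import Order.TTheory GRing.Theory Num.Theory Num.Def.
Import numFieldNormedType.Exports.
Local Open Scope classical_set_scope.
Local Open Scope ring_scope.
Set Implicit Arguments. Unset Strict Implicit.
Lemma powD_le (R : realType) (u v p : R) : 0 <= u -> 0 <= v -> 0 <= p ->
  (u + v) `^ p <= 2 `^ p * (u `^ p + v `^ p).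
Proof.
move=> u0 v0 p0.
have h1 : u + v <= 2 * Num.max u v.
  have : u <= Num.max u v by rewrite le_max lexx.
  have : v <= Num.max u v by rewrite le_max lexx orbT.
  lra.
have m0 : 0 <= Num.max u v by rewrite le_max u0.
apply: (le_trans (ge0_ler_powR p0 _ _ h1)); rewrite ?nnegrE ?addr_ge0 ?mulr_ge0 //.
rewrite powRM //; apply: ler_wpM2l; first exact: powR_ge0.
rewrite /Num.max; case: ifP => _.
  by rewrite lerDr powR_ge0.
by rewrite lerDl powR_ge0.
Qed.

Lemma Lp_le d (T : measurableType d) (R : realType) (P : probability T R)
  (p : R) (X Y : T -> R) (k D : R) : 0 <= p -> 0 <= k -> 0 <= D ->
  measurable_fun setT X -> Lp P p Y ->
  {ae P, forall w, `|X w| <= k * `|Y w| + D} -> Lp P p X.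
Proof.
move=> p0 k0 D0 mX [mY iY] H; split; first exact: mX.
have mXp : measurable_fun setT (EFin \o (fun w => `|X w| `^ p) : T -> \bar R).
  apply/measurable_EFinP.
  have h1 := (measurableT_comp (@normr_measurable R setT) mX).
  exact: (measurableT_comp (@measurable_powR R p) h1).
have mYp : measurable_fun setT (EFin \o (fun w => `|Y w| `^ p) : T -> \bar R).
  apply/measurable_EFinP.
  have h1 := (measurableT_comp (@normr_measurable R setT) mY).
  exact: (measurableT_comp (@measurable_powR R p) h1).
pose c1 := 2 `^ p * k `^ p. pose c2 := 2 `^ p * D `^ p.
have c10 : 0 <= c1 by rewrite mulr_ge0 ?powR_ge0.
have c20 : 0 <= c2 by rewrite mulr_ge0 ?powR_ge0.
apply: (le_lt_trans (y := (\int[P]_w ((c1%:E * (`|Y w| `^ p)%:E) + c2%:E))%E)).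
  apply: ae_ge0_le_integral => //.
  - by move=> w _; rewrite adde_ge0 ?mule_ge0 ?lee_fin ?powR_ge0.
  - apply: emeasurable_funD => //.
    by apply: emeasurable_funM => //.
  - apply: filterS H => w /= Hw _; rewrite -EFinM -EFinD lee_fin.
    have h1 : `|X w| `^ p <= (k * `|Y w| + D) `^ p.
      by apply: ge0_ler_powR; rewrite ?nnegrE ?addr_ge0 ?mulr_ge0.
    have h2 := @powD_le R (k * `|Y w|) D p (mulr_ge0 k0 (normr_ge0 _)) D0 p0.
    rewrite powRM // in h2.
    have e : c1 * `|Y w| `^ p + c2 = 2 `^ p * (k `^ p * `|Y w| `^ p + D `^ p).
      by rewrite /c1 /c2; ring.
    rewrite e; exact: (le_trans h1 h2).
rewrite ge0_integralD //; first rewrite ge0_integralZl //.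
all: try by move=> w _; apply: mule_ge0; [exact: c10|exact: powR_ge0].
all: try by apply: emeasurable_funM.
rewrite integral_cst //.
rewrite lte_add_pinfty // lte_mul_pinfty // ?lee_fin //.
by apply: (le_lt_trans (probability_le1 _ _)); rewrite ?ltry.
Qed.

Lemma inF_ge0 (R : realType) (f : R -> R) t : inF f -> 0 <= f t.
Proof.
case=> h1 h2 _ _; have [t0|t0] := ltP t 0; first by rewrite h2.
by case/andP: (h1 t t0).
Qed.

Lemma inF_le (R : realType) (f : R -> R) t : inF f -> 0 <= t -> f t <= t.
Proof. by case=> h1 _ _ _ t0; case/andP: (h1 t t0). Qed.

Lemma inF_nd (R : realType) (f : R -> R) : inF f -> {homo f : s t / s <= t}.
Proof.
move=> hf; have [h1 h2 h3 _] := hf; move=> s t st.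
have [s0|s0] := ltP s 0; first by rewrite (h2 s s0) inF_ge0.
apply: h3 => //; rewrite in_itv /= andbT //.
exact: le_trans st.
Qed.

Lemma max0_facts (R : realType) (a : R) :
  a <= Num.max a 0 /\ 0 <= Num.max a 0.
Proof. by rewrite !le_max !lexx ?orbT. Qed.

Lemma max0_le (R : realType) (a b : R) : a <= b -> 0 <= b -> Num.max a 0 <= b.
Proof. by move=> h1 h2; rewrite ge_max h1 h2. Qed.

Lemma ptw_bound (R : realType) (f : R -> R) (y z c pY M A Lc Uc x gv : R) :
  inF f -> 0 <= y -> 0 <= z -> z <= M -> 0 <= c -> c <= pY -> 0 <= A ->
  - Lc - A * Num.max (x + z - f y - c) 0 <= gv ->
  gv <= Uc + A * Num.max (- (x + z - f y - c)) 0 ->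
  - ((1 + A) * M + Lc) - (1 + A) * Num.max x 0 <= f y + c - z - x + gv /\
  f y + c - z - x + gv <= (1 + A) * y + ((1 + A) * pY + Uc + (1 + A) * Num.max (- x) 0).
Proof.
move=> hf y0 z0 zM c0 cp A0 g1 g2.
have fy0 := inF_ge0 y hf. have fyy := inF_le hf y0.
have [mx1 mx2] := max0_facts x. have [mn1 mn2] := max0_facts (- x).
have e1 : Num.max (x + z - f y - c) 0 <= Num.max x 0 + z.
  apply: max0_le; lra.
have e2 : Num.max (- (x + z - f y - c)) 0 <= Num.max (- x) 0 + f y + c.
  apply: max0_le; lra.
have a1 := ler_wpM2l A0 e1. have a2 := ler_wpM2l A0 e2.
have a3 := ler_wpM2l A0 zM. have a4 := ler_wpM2l A0 fyy. have a5 := ler_wpM2l A0 cp.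
have a6 : 0 <= A * Num.max x 0 by rewrite mulr_ge0.
split; nra.
Qed.

Section Step.
Context d (T : measurableType d) (R : realType) (P : probability T R) (p : R).
Hypothesis p0 : 0 <= p.

Lemma Lp_cst (Y : T -> R) (K : R) : Lp P p Y -> Lp P p (fun _ => K).
Proof.
move=> hY; apply: (@Lp_le _ _ _ _ _ _ Y 0 `|K|) => //.
apply: nearW => w; rewrite mul0r add0r //.
Qed.

Lemma rho_cst (rho0 : (T -> R) -> \bar R) (Y : T -> R) (K : R) :
  risk_measure P p rho0 -> Lp P p Y -> rho0 (fun _ => K) = K%:E.
Proof.
move=> [_ _ tr nm _] hY.
have := tr (fun _ => 0) K (Lp_cst 0 hY).
rewrite nm add0e => <-; congr rho0; apply: funext => w; by rewrite add0r.
Qed.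

Lemma step (rho0 : (T -> R) -> \bar R) (Yn Zn : T -> R) (f g : R -> R)
  (c pY M A Lc Uc x : R) :
  risk_measure P p rho0 -> Lp P p Yn -> {ae P, forall w, 0 <= Yn w} ->
  {ae P, forall w, 0 <= Zn w} -> {ae P, forall w, Zn w <= M} ->
  inF f -> 0 <= c -> c <= pY -> 0 <= A ->
  (forall x', - Lc - A * Num.max x' 0 <= g x' <= Uc + A * Num.max (- x') 0) ->
  measurable_fun setT (fun w => f (Yn w) + c - Zn w - x + g (x + Zn w - f (Yn w) - c)) ->
  ((- ((1 + A) * M + Lc) - (1 + A) * Num.max x 0)%:E <=
     rho0 (fun w => (f (Yn w) + c - Zn w - x + g (x + Zn w - f (Yn w) - c))%R))%E /\
  (rho0 (fun w => (f (Yn w) + c - Zn w - x + g (x + Zn w - f (Yn w) - c))%R) <=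
     rho0 (fun w => ((1 + A) * Yn w)%R) + ((1 + A) * pY + Uc + (1 + A) * Num.max (- x) 0)%:E)%E.
Proof.
move=> hrho hY Y0 Z0 ZM hf c0 cp A0 hg mX.
set X := (fun w => _ + g _).
set L := - ((1 + A) * M + Lc) - (1 + A) * Num.max x 0.
set K := (1 + A) * pY + Uc + (1 + A) * Num.max (- x) 0.
have A1 : 0 <= 1 + A by lra.
have hb : {ae P, forall w, L <= X w /\ X w <= (1 + A) * Yn w + K}.
  apply: filterS3 Y0 Z0 ZM => w y0 z0 zM.
  have [g1 g2] := andP (hg (x + Zn w - f (Yn w) - c)).
  exact: ptw_bound.
have mY : measurable_fun setT Yn by case: hY.
have mkY : measurable_fun setT (fun w => (1 + A) * Yn w).
  exact: (measurable_funM (measurable_cst (1 + A)) mY).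
have LkY : Lp P p (fun w => (1 + A) * Yn w).
  apply: (@Lp_le _ _ _ _ _ _ Yn (1 + A) 0) => //.
  by apply: nearW => w; rewrite addr0 normrM ger0_norm.
have LkYK : Lp P p (fun w => (1 + A) * Yn w + K).
  apply: (@Lp_le _ _ _ _ _ _ Yn (1 + A) `|K|) => //.
    exact: (measurable_funD mkY (measurable_cst K)).
  apply: nearW => w; rewrite (le_trans (ler_normD _ _)) // normrM ger0_norm //.
have LX : Lp P p X.
  apply: (@Lp_le _ _ _ _ _ _ Yn (1 + A) (`|K| + `|L|)); rewrite ?addr_ge0 //.
  apply: filterS2 hb Y0 => w [h1 h2] y0.
  rewrite (ger0_norm y0).
  have nK := ler_norm K; have nL := ler_norm (- L).
  rewrite normrN in nL. have ky := mulr_ge0 A1 y0. have nL0 := normr_ge0 L. have nK0 := normr_ge0 K.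
  have [xp|xn] := lerP 0 (X w).
    rewrite (ger0_norm xp); lra.
  rewrite (ltr0_norm xn); lra.
have [_ mon tr _ _] := hrho.
split.
  rewrite -(rho_cst L hrho hY).
  apply: (mon _ _ (Lp_cst L hY) LX).
  by apply: filterS hb => w [].
rewrite -(tr _ _ LkY).
apply: (mon _ _ LX LkYK).
by apply: filterS hb => w [].
Qed.
End Step.

Section Facts.
Context d (T : measurableType d) (R : realType) (P : probability T R) (p : R).
Hypothesis p0 : 0 <= p.

Lemma Z_facts (Zn : T -> R) : Linf_plus P Zn ->
  exists M, ess_sup P (fun w => (Zn w)%:E) = M%:E /\ {ae P, forall w, Zn w <= M}.
Proof.
case=> mZ [M0 HM] Z0.
have P1 : (0 < P [set: T])%E by rewrite probability_setT.
have ge0 : (0 <= ess_sup P (fun w => (Zn w)%:E))%E.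
  apply: ess_sup_gee => //; apply: filterS Z0 => w; by rewrite lee_fin.
have leM : (ess_sup P (fun w => (Zn w)%:E) <= M0%:E)%E.
  apply/ess_supP; apply: filterS HM => w h; rewrite lee_fin.
  exact: le_trans (ler_norm _) h.
have fin : ess_sup P (fun w => (Zn w)%:E) \is a fin_num.
  by rewrite ge0_fin_numE // (le_lt_trans leM) ?ltry.
exists (fine (ess_sup P (fun w => (Zn w)%:E))); split; first by rewrite fineK.
apply: filterS (ess_sup_ge P (fun w => (Zn w)%:E)) => w h.
by rewrite -lee_fin fineK.
Qed.

Lemma pi_facts (pi0 : (T -> R) -> \bar R) (Yn : T -> R) (f : R -> R) :
  premium_principle P p pi0 -> Lp_plus P p Yn -> inF f -> (pi0 Yn < +oo)%E ->
  exists pY, pi0 Yn = pY%:E /\ 0 <= fine (pi0 (fun w => Yn w - f (Yn w))) <= pY.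
Proof.
move=> [_ mon nm _] [hY Y0] hf lt.
have mY : measurable_fun setT Yn by case: hY.
have L0 : Lp_plus P p (fun _ => 0) by split; [exact: Lp_cst hY | exact: nearW].
have LYf : Lp_plus P p (fun w => Yn w - f (Yn w)).
  split; last by apply: filterS Y0 => w y0; rewrite subr_ge0 inF_le.
  apply: (@Lp_le _ _ _ _ _ _ Yn 1 0) => //.
    have mf : measurable_fun setT f.
      exact: nondecreasing_measurable (inF_nd hf).
    exact: (measurable_funB mY (measurableT_comp mf mY)).
  apply: nearW => w; rewrite mul1r addr0.
  have [y0|y0] := lerP 0 (Yn w).
    have := inF_ge0 (Yn w) hf; have := inF_le hf y0.
    rewrite (ger0_norm y0) => h1 h2; rewrite ger0_norm; lra.
  have [_ h2 _ _] := hf; rewrite h2 // subr0 //.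
have e1 : (0 <= pi0 (fun w => (Yn w - f (Yn w))%R))%E.
  rewrite -nm; apply: (mon _ _ L0 LYf).
  by apply: filterS Y0 => w y0; rewrite subr_ge0 inF_le.
have e2 : (pi0 (fun w => (Yn w - f (Yn w))%R) <= pi0 Yn)%E.
  apply: (mon _ _ LYf (conj hY Y0)); apply: nearW => w; have := inF_ge0 (Yn w) hf; lra.
have piY0 : (0 <= pi0 Yn)%E := le_trans e1 e2.
have fin1 : pi0 Yn \is a fin_num by rewrite ge0_fin_numE.
have fin2 : pi0 (fun w => (Yn w - f (Yn w))%R) \is a fin_num.
  by rewrite ge0_fin_numE // (le_lt_trans e2).
exists (fine (pi0 Yn)); split; first by rewrite fineK.
by rewrite fine_ge0 //= fine_le.
Qed.

Lemma rho_kY (rho0 : (T -> R) -> \bar R) (Yn : T -> R) (k : R) :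
  risk_measure P p rho0 -> Lp_plus P p Yn -> 0 <= k ->
  (rho0 (fun w => (k * Yn w)%R) < +oo)%E ->
  exists rk, rho0 (fun w => (k * Yn w)%R) = rk%:E.
Proof.
move=> hr [hY Y0] k0 lt; have [_ mon _ nm _] := hr.
have mY : measurable_fun setT Yn by case: hY.
have LkY : Lp P p (fun w => k * Yn w).
  apply: (@Lp_le _ _ _ _ _ _ Yn k 0) => //.
    exact: (measurable_funM (measurable_cst k) mY).
  by apply: nearW => w; rewrite addr0 normrM ger0_norm.
have e1 : (0 <= rho0 (fun w => (k * Yn w)%R))%E.
  rewrite -nm; apply: (mon _ _ (Lp_cst p0 0 hY) LkY).
  by apply: filterS Y0 => w y0; rewrite mulr_ge0.
exists (fine (rho0 (fun w => (k * Yn w)%R))); rewrite fineK //.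
by rewrite ge0_fin_numE.
Qed.
End Facts.

Lemma Vpol_unfold (T : Type) (R : realType) (rho pi : nat -> (T -> R) -> \bar R)
  (Y Z : nat -> T -> R) (beta : R) (dp : policy R) (N n : nat) (h : hist R) (x : R) :
  (n < N)%N -> Vpol rho pi Y Z beta dp N n h x = rho n (Varg rho pi Y Z beta dp N n h x).
Proof. by move=> nN; rewrite /Vpol -subnSK. Qed.

Lemma pi_fin d (T : measurableType d) (R : realType) (P : probability T R) (p : R)
  (p0 : 0 <= p) (pi0 : (T -> R) -> \bar R) (Yn : T -> R) :
  premium_principle P p pi0 -> Lp_plus P p Yn -> (pi0 Yn < +oo)%E ->
  pi0 Yn = (fine (pi0 Yn))%:E.
Proof.
move=> [_ mon nm _] [hY Y0] lt.
have L0 : Lp_plus P p (fun _ => 0) by split; [exact: (Lp_cst p0 0 hY) | exact: nearW].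
have e1 : (0 <= pi0 Yn)%E.
  rewrite -nm; apply: (mon _ _ L0 (conj hY Y0)).
  by apply: filterS Y0 => w y0.
by rewrite fineK // ge0_fin_numE.
Qed.

Lemma valid_rcons (T : Type) (R : realType) (pi : nat -> (T -> R) -> \bar R)
  (Y : nat -> T -> R) (budget : bool) (n : nat) (h : hist R) (x : R) (f : R -> R) :
  valid_hist pi Y budget n h -> Dadm pi Y budget n x f ->
  valid_hist pi Y budget n.+1 (rcons h (x, f)).
Proof.
move=> [sh vh] hd; split; first by rewrite size_rcons sh.
move=> k kn; rewrite nth_rcons sh; case: ltnP => [kn'|kn']; first exact: vh.
have -> : k = n by apply/eqP; rewrite eqn_leq kn'; rewrite ltnS in kn; rewrite kn.
by rewrite eqxx.
Qed.

Unset Implicit Arguments.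
Set Strict Implicit.

Theorem mainTheorem3 (d : measure_display) (T : measurableType d) (R : realType)
  (P : probability T R) (p : R) (N : nat) (beta : R)
  (Y Z : nat -> T -> R)
  (rho pi : nat -> (T -> R) -> \bar R) (budget : bool)
  (a : nat -> R) (cl cb : nat -> \bar R) :
  1 <= p -> (0 < N)%N -> 0 < beta <= 1 ->
  (* claims and premium incomes *)
  (forall n, (0 < n)%N -> Lp_plus P p (Y n)) ->
  (forall n, (0 < n)%N -> Linf_plus P (Z n)) ->
  indep_seq P Y Z ->
  (* premium principles and risk measures *)
  (forall n, (n < N)%N -> premium_principle P p (pi n)) ->
  (forall n, (n < N)%N -> (pi n (Y n.+1) < +oo)%E) ->
  (forall n, (n < N)%N -> risk_measure P p (rho n)) ->
  (forall n, (n < N)%N -> forall lam : R, 0 <= lam ->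
     (rho n (fun w => (lam * Y n.+1 w)%R) < +oo)%E) ->
  (* the coefficients *)
  a N.-1 = 1 ->
  (forall n, (n.+1 < N)%N -> a n = 1 + beta * a n.+1) ->
  cl N.-1 = ess_sup P (fun w => (Z N w)%:E) ->
  (forall n, (n.+1 < N)%N ->
     cl n = ((1 + beta * a n.+1)%R%:E * ess_sup P (fun w => (Z n.+1 w)%:E)
             + beta%:E * cl n.+1)%E) ->
  cb N.-1 = (rho N.-1 (Y N) + pi N.-1 (Y N))%E ->
  (forall n, (n.+1 < N)%N ->
     cb n = (rho n (fun w => ((1 + beta * a n.+1) * Y n.+1 w)%R)
             + (1 + beta * a n.+1)%R%:E * pi n (Y n.+1) + beta%:E * cb n.+1)%E) ->
  forall dp : policy R,
  admissible_policy pi Y budget N dp ->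
  (* standing assumption: the arguments of rho_n are random variables *)
  (forall n h x, (n < N)%N -> valid_hist pi Y budget n h ->
     measurable_fun setT (Varg rho pi Y Z beta dp N n h x)) ->
  forall n (h : hist R) (x : R), (n < N)%N -> valid_hist pi Y budget n h ->
    (- cl n - (a n * Num.max x 0)%R%:E <= Vpol rho pi Y Z beta dp N n h x)%E /\
    (Vpol rho pi Y Z beta dp N n h x <= cb n + (a n * Num.max (- x) 0)%R%:E)%E.
Proof.
move=> p1 N0 /andP[b0 b1] hY hZ _ hpi piY hrho rhoY a0 aS cl0 clS cb0 cbS dp adm hmeas.
have p0 : 0 <= p by lra.
have [N' eN] : exists N', N = N'.+1 by exists N.-1; rewrite prednK.
subst N; simpl in a0, cl0, cb0.
pose V n h x := Vpol rho pi Y Z beta dp N'.+1 n h x.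
have gen : forall n (A Lc Uc : R), (n < N'.+1)%N -> 0 <= A ->
  (forall h x x', valid_hist pi Y budget n h ->
     - Lc - A * Num.max x' 0 <= beta * fine (V n.+1 (rcons h (x, dp n h x)) x')
     <= Uc + A * Num.max (- x') 0) ->
  ess_sup P (fun w => (Z n.+1 w)%:E) = (fine (ess_sup P (fun w => (Z n.+1 w)%:E)))%:E /\
  forall h x, valid_hist pi Y budget n h ->
   ((- ((1 + A) * fine (ess_sup P (fun w => (Z n.+1 w)%:E)) + Lc)
      - (1 + A) * Num.max x 0)%:E <= V n h x)%E /\
   (V n h x <= rho n (fun w => ((1 + A) * Y n.+1 w)%R) +
     ((1 + A) * fine (pi n (Y n.+1)) + Uc + (1 + A) * Num.max (- x) 0)%:E)%E.
  move=> n A Lc Uc nN A0 hg.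
  have hZn := hZ n.+1 (ltn0Sn n).
  have [M [eM hM]] := Z_facts hZn.
  rewrite eM /=; split => // h x vh.
  have [hf _] := adm n h x nN vh.
  have hYp := hY n.+1 (ltn0Sn n).
  have [pY [epY /andP[c0 cp]]] := pi_facts p0 (hpi n nN) hYp hf (piY n nN).
  rewrite epY /=.
  have [_ _ Z0] := hZn.
  have := step p0 (g := fun x' => beta * fine (V n.+1 (rcons h (x, dp n h x)) x'))
    (hrho n nN) hYp.1 hYp.2 Z0 hM hf c0 cp A0 (hg h x ^~ vh) (hmeas n h x nN vh).
  by rewrite /V Vpol_unfold.
have Vreal : forall n h x (lo up : R), (lo%:E <= V n h x)%E -> (V n h x <= up%:E)%E ->
    V n h x = (fine (V n h x))%:E /\ lo <= fine (V n h x) <= up.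
  move=> n h x lo up; case: (V n h x) => [r| |] //= h1 h2.
  by split => //; apply/andP; split; rewrite -lee_fin.
have key : forall m n, (n + m = N')%N ->
  [/\ 1 <= a n, cl n = (fine (cl n))%:E, cb n = (fine (cb n))%:E &
   forall h x, valid_hist pi Y budget n h ->
    (- cl n - (a n * Num.max x 0)%R%:E <= V n h x)%E /\ (V n h x <= cb n + (a n * Num.max (- x) 0)%R%:E)%E].
  elim=> [|m IH] n.
    rewrite addn0 => ->.
    have nN : (N' < N'.+1)%N by [].
    have hg0 : forall h x x', valid_hist pi Y budget N' h ->
      - 0 - 0 * Num.max x' 0 <= beta * fine (V N'.+1 (rcons h (x, dp N' h x)) x')
      <= 0 + 0 * Num.max (- x') 0.
      by move=> h x x' _; rewrite /V /Vpol subnn /= mulr0 !mul0r subr0 oppr0 addr0 lexx.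
    have [eM bnd] := gen N' 0 0 0 nN (lexx 0) hg0.
    have hYp := hY N'.+1 (ltn0Sn _).
    have epi := pi_fin p0 (hpi N' nN) hYp (piY N' nN).
    have [rr err] := rho_kY p0 (hrho N' nN) hYp ler01 (rhoY N' nN 1 ler01).
    have e1 : (fun w => ((1 + 0) * Y N'.+1 w)%R) = Y N'.+1.
      by apply: funext => w; rewrite addr0 mul1r.
    have e2 : (fun w => (1 * Y N'.+1 w)%R) = Y N'.+1.
      by apply: funext => w; rewrite mul1r.
    rewrite e2 in err.
    split.
    - by rewrite a0.
    - by rewrite cl0.
    - by rewrite cb0 epi err -EFinD.
    - move=> h x vh; have [lo up] := bnd h x vh; rewrite e1 in up; split.
      + apply: le_trans lo; rewrite cl0 eM a0 -EFinN -EFinB lee_fin; lra.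
      + apply: (le_trans up); rewrite cb0 err epi a0 -!EFinD lee_fin; lra.
  move=> e.
  have e' : (n.+1 + m = N')%N by rewrite addSnnS.
  have nN : (n < N'.+1)%N by rewrite -e ltnS leq_addr.
  have nn1 : (n.+1 < N'.+1)%N by rewrite ltnS -e addnS ltnS leq_addr.
  have [a1 ecl ecb bnd1] := IH _ e'.
  have hg : forall h x x', valid_hist pi Y budget n h ->
      - (beta * fine (cl n.+1)) - (beta * a n.+1) * Num.max x' 0
        <= beta * fine (V n.+1 (rcons h (x, dp n h x)) x')
      <= beta * fine (cb n.+1) + (beta * a n.+1) * Num.max (- x') 0.
    move=> h x x' vh.
    have vh' := valid_rcons vh (adm n h x nN vh).
    have [lo up] := bnd1 _ x' vh'.
    rewrite ecl -EFinN -EFinB in lo; rewrite ecb -EFinD in up.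
    have [_ /andP[h1 h2]] := Vreal _ _ _ _ _ lo up.
    have [ma1 ma2] := max0_facts x'. have [mb1 mb2] := max0_facts (- x').
    apply/andP; split; nra.
  have A0 : 0 <= beta * a n.+1 by rewrite mulr_ge0 //; lra.
  have [eM bnd] := gen n _ _ _ nN A0 hg.
  have hYp := hY n.+1 (ltn0Sn _).
  have epi := pi_fin p0 (hpi n nN) hYp (piY n nN).
  have k0 : 0 <= 1 + beta * a n.+1 by lra.
  have [rr err] := rho_kY p0 (hrho n nN) hYp k0 (rhoY n nN _ k0).
  have ea := aS n nn1. have ecln := clS n nn1. have ecbn := cbS n nn1.
  split.
  - by rewrite ea; lra.
  - by rewrite ecln eM ecl -!EFinM -!EFinD.
  - by rewrite ecbn err epi ecb -!EFinM -!EFinD.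
  - move=> h x vh; have [lo up] := bnd h x vh; split.
    + apply: le_trans lo; rewrite ecln eM ecl ea -!EFinM -!EFinD lee_fin /=; lra.
    + apply: (le_trans up); rewrite ecbn err epi ecb ea -!EFinM -!EFinD lee_fin; lra.
move=> n h x nN vh.
have nle : (n <= N')%N by rewrite -ltnS.
have [_ _ _ bnd] := key (N' - n)%N n (subnKC nle).
exact: bnd.
Qed.
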